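(* For $k\ge 2$ let $f_k(x)=\sum_{n\ge 0}|S_n(123,\,k(k-1)\cdots 21(k+1))|\,x^n$ (the $n=0$ term being $1$). Then $f_2(x)=\frac{1-x}{1-2x}$ and, for every $k\ge 3$, $$f_k(x)=\frac{1}{1-x\,f_{k-1}(x)}.$$ In particular $f_3(x)=\frac{1-2x}{1-3x+x^2}$, so $|S_n(123,3214)|$ is the sequence $1,1,2,5,13,34,89,\dots$ (defined by $\bar F_0=\bar F_1=1$, $\bar F_2=2$, $\bar F_n=3\bar F_{n-1}-\bar F_{n-2}$ for $n\ge 3$). *)

(* Defs.v *)
From mathcomp Require Import all_boot all_order all_algebra all_fingroup.
Set Implicit Arguments. Unset Strict Implicit. Unset Printing Implicit Defensive.
Import Order.TTheory GRing.Theory Num.Theory.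

Definition contains (n : nat) (s : 'S_n) (p : seq nat) : bool :=
  [exists f : {ffun 'I_(size p) -> 'I_n},
     [forall a : 'I_(size p), forall b : 'I_(size p),
        ((a < b)%N ==> (f a < f b)%N) &&
        (((s (f a) : nat) < s (f b))%N == (nth 0 p a < nth 0 p b)%N)]].

Definition avoids (n : nat) (s : 'S_n) (p : seq nat) : bool := ~~ contains s p.

Definition tau (k : nat) : seq nat := rcons (rev (iota 1 k)) k.+1.

Definition pat123 : seq nat := [:: 1; 2; 3].

Definition av (k n : nat) : nat :=
  #|[set s : 'S_n | avoids s pat123 && avoids s (tau k)]|.

Definition fps := nat -> int.
Local Open Scope ring_scope.
Definition fps_const (c : int) : fps := fun n => if n is 0 then c else 0.
Definition fps_X : fps := fun n => if n == 1%N then 1 else 0.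
Definition fps_add (f g : fps) : fps := fun n => f n + g n.
Definition fps_sub (f g : fps) : fps := fun n => f n - g n.
Definition fps_scale (c : int) (f : fps) : fps := fun n => c * f n.
Definition fps_mul (f g : fps) : fps :=
  fun n => \sum_(i < n.+1) f i * g (n - i)%N.

Definition gf (k : nat) : fps := fun n => (av k n)%:Z.

(* Main.v *)
Require Import Defs.
From mathcomp Require Import all_boot all_order all_algebra all_fingroup.
From mathcomp Require Import zify.
From Stdlib Require Import Classical_Prop.
Set Implicit Arguments. Unset Strict Implicit. Unset Printing Implicit Defensive.

Fixpoint n123 (w : seq nat) : bool :=
  if w is x :: t then pairwise (fun a b => ~~ ((x < a) && (a < b))) t && n123 t else true.

Fixpoint okk_aux (k : nat) (pre w : seq nat) : bool :=
  if w is x :: t then (count (fun y => y < x) pre < k) && okk_aux k (x :: pre) t else true.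
Definition okk k w := okk_aux k [::] w.

Definition dec (l : seq nat) := pairwise (fun a b => b <= a) l.
Fixpoint decn (w : seq nat) : nat :=
  if w is x :: t then (if t is y :: _ then (if y <= x then decn t else 0) else 0).+1 else 0.

Definition ins (p n : nat) (w : seq nat) := take p w ++ n :: drop p w.

Lemma pairwise_true (T : Type) (r : rel T) (s : seq T) :
  (forall a b, r a b) -> pairwise r s.
Proof. move=> H; elim: s => //= x s ->; rewrite andbT.
by elim: s => //= y s ->; rewrite H. Qed.

Lemma pairwise_true_in (r : rel nat) (s : seq nat) :
  (forall a b, a \in s -> r a b) -> pairwise r s.
Proof.
elim: s => //= x s IH H; rewrite IH ?andbT; last by move=> a b ab; apply: H; rewrite inE ab orbT.
by apply/allP => b _; apply: H; rewrite inE eqxx.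
Qed.

Lemma pw_ins x n p t : all (fun y => y < n) t ->
  pairwise (fun a b => ~~ ((x < a) && (a < b))) (take p t ++ n :: drop p t) =
  all (fun a => a <= x) (take p t) &&
  pairwise (fun a b => ~~ ((x < a) && (a < b))) t.
Proof.
move=> /allP Hall.
set R := fun a b => ~~ ((x < a) && (a < b)).
rewrite -[pairwise R t](congr1 (pairwise R) (cat_take_drop p t)).
rewrite !pairwise_cat allrel_consr /=.
have -> : all (fun a => ~~ ((x < a) && (a < n))) (take p t) =
          all (fun a => a <= x) (take p t).
  apply: eq_in_all => a /mem_take /Hall an; rewrite an andbT -leqNgt //.
have -> : all (fun b => ~~ ((x < n) && (n < b))) (drop p t).
  apply/allP => b /mem_drop /Hall bn.
  by rewrite [n < b]ltnNge (ltnW bn) andbF.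
by case: (all _ _); case: (allrel _ _ _); case: (pairwise _ (take _ _)).
Qed.

Lemma ins_n123 n p w : all (fun y => y < n) w ->
  n123 (ins p n w) = n123 w && dec (take p w).
Proof.
rewrite /ins; elim: w p => [|x t IH] [|p] Hall //=.
- move: Hall => /= /andP[xn /allP tn].
  have -> : all (fun b : nat => ~~ ((n < x) && (x < b))) t.
    by apply/allP => b _; rewrite [n < x]ltnNge (ltnW xn).
  rewrite pairwise_true_in ?andbT // => a b /tn an.
  by rewrite [n < a]ltnNge (ltnW an).
- move: Hall => /= /andP[xn tn].
  rewrite pw_ins // IH // /dec /=.
  by case: (all _ _); case: (pairwise _ t); case: (n123 t); case: (pairwise _ (take _ _)).
Qed.

Lemma dec_cons x u : dec (x :: u) = all (fun b => b <= x) u && dec u.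
Proof. by []. Qed.

Lemma dec_take w p : p <= size w -> dec (take p w) = (p <= decn w).
Proof.
elim: w p => [|x t IH] [|p] // Hp.
rewrite [take _ _]/= dec_cons [decn _]/= ltnS.
case: t IH Hp => [|y t'] IH Hp.
  by move: Hp => /=; rewrite ltnS leqn0 => /eqP ->.
case: ifP => yx.
  rewrite -IH //; case: p Hp => [|p] Hp //.
  rewrite [take p.+1 _]/= dec_cons /= yx /=.
  case Hy: (all (leq^~ y) _); rewrite ?andbF ?andbT //=.
  have -> // : all (leq^~ x) (take p t').
  by apply: sub_all Hy => b /leq_trans; apply.
by case: p Hp => [|p] Hp //; rewrite [take p.+1 _]/= /= yx.
Qed.

Lemma decn_size w : decn w <= size w.
Proof.
elim: w => //= x t IH; rewrite ltnS.
by case: t IH => //= y t IH; case: ifP.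
Qed.

Lemma decn_ins n p w : all (fun y => y < n) w -> p <= size w -> p <= decn w ->
  decn (ins p n w) = if p == 0 then (decn w).+1 else p.
Proof.
rewrite /ins; case: p => [|p] /=.
  by case: w => //= y t /andP[yn _] _ _; rewrite (ltnW yn).
elim: w p => [|x t IH] p //= /andP[xn tn] Hp Hd.
case: p Hp Hd IH => [|p] Hp Hd IH /=.
  by rewrite take0 drop0 /= leqNgt xn.
case: t Hp Hd IH tn => [|y t'] Hp Hd IH tn; first by [].
move: Hd; rewrite [decn _]/= ltnS; case: ifP => yx Hd; last by [].
have := IH p tn Hp Hd.
by rewrite [take _ _]/= [drop _ _]/= /= yx => ->.
Qed.

Lemma okk_count k pre pre' t :
  (forall x, x \in t -> count (fun y => y < x) pre = count (fun y => y < x) pre') ->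
  okk_aux k pre t = okk_aux k pre' t.
Proof.
elim: t pre pre' => //= x t IH pre pre' H.
rewrite H ?inE ?eqxx //; congr (_ && _); apply: IH => y yt /=.
by rewrite H // inE yt orbT.
Qed.

Lemma count_lt_all n pre : all (fun y => y < n) pre -> count (fun y => y < n) pre = size pre.
Proof. by move=> H; apply/eqP; rewrite -all_count. Qed.

Lemma ins_okk k n p w pre : all (fun y => y < n) w -> all (fun y => y < n) pre ->
  okk_aux k pre (ins p n w) = okk_aux k pre w && (size pre + minn p (size w) < k).
Proof.
rewrite /ins; elim: w p pre => [|x t IH] p pre /= Hw Hpre.
  by rewrite count_lt_all // andbT minn0 addn0.
case: p => [|p].
  rewrite take0 drop0 [okk_aux _ _ (n :: _)]/= count_lt_all // min0n addn0.
  move: Hw => /andP[xn /allP tn].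
  rewrite [n < x]ltnNge (ltnW xn) /=.
  rewrite (@okk_count k [:: x, n & pre] (x :: pre)); last first.
    move=> y /tn yn /=; by rewrite [n < y]ltnNge (ltnW yn).
  by case: (size pre < k); case: (_ < k); case: (okk_aux _ _ _).
move: Hw => /andP[xn tn].
rewrite [take _ _]/= [drop _ _]/= cat_cons [okk_aux _ _ (x :: _)]/= IH //=; last by rewrite Hpre andbT.
by rewrite minnSS addSn addnS; case: (_ < k); case: (okk_aux _ _ _).
Qed.

Definition perms n := permutations (iota 0 n).

Lemma perms_prop n w : w \in perms n ->
  [/\ all (fun y => y < n) w, size w = n & uniq w].
Proof.
rewrite mem_permutations => H; split.
- by apply/allP => y; rewrite (perm_mem H) mem_iota.
- by rewrite (perm_size H) size_iota.
- by rewrite (perm_uniq H) iota_uniq.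
Qed.

Lemma rem_cat_n (n : nat) u v : n \notin u -> rem n (u ++ n :: v) = u ++ v.
Proof.
elim: u => /= [|y u IH]; first by rewrite eqxx.
rewrite inE negb_or => /andP[ny nu]; by rewrite eq_sym (negbTE ny) IH.
Qed.

Lemma ins_rem n x : n \in x -> x = ins (index n x) n (rem n x).
Proof.
rewrite /ins; elim: x => //= y x IH; rewrite inE.
case: (eqVneq y n) => [->|ny] /= H; first by rewrite ?eqxx /= ?take0 ?drop0.
by rewrite -IH.
Qed.

Lemma index_ins n p w : n \notin w -> p <= size w -> index n (ins p n w) = p.
Proof.
move=> nw pw; rewrite /ins index_cat.
have -> : (n \in take p w) = false by apply/negP => /mem_take; apply/negP.
by rewrite /= eqxx addn0 size_takel.
Qed.

Lemma rem_ins n p w : n \notin w -> rem n (ins p n w) = w.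
Proof.
move=> nw; rewrite /ins rem_cat_n ?cat_take_drop //.
by apply/negP => /mem_take; apply/negP.
Qed.

Lemma perms_ins n :
  perm_eq (perms n.+1) [seq ins p n w | w <- perms n, p <- iota 0 n.+1].
Proof.
apply: uniq_perm; first exact: permutations_uniq.
  apply: allpairs_uniq; [exact: permutations_uniq| exact: iota_uniq|].
  move=> [w1 p1] [w2 p2] H1 H2 /= E.
  case/allpairsP: H1 => [[w3 p3] [Hw1 Hp1 [E1 E2]]]; subst w3 p3.
  case/allpairsP: H2 => [[w3 p3] [Hw2 Hp2 [E1 E2]]]; subst w3 p3.
  rewrite mem_iota in Hp1; rewrite mem_iota in Hp2.
  move: Hp1 Hp2 Hw1 Hw2 => /= Hp1 Hp2 Hw1 Hw2.
  have [a1 s1 _] := perms_prop Hw1; have [a2 s2 _] := perms_prop Hw2.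
  have n1 : n \notin w1 by apply/negP => /(allP a1); rewrite ltnn.
  have n2 : n \notin w2 by apply/negP => /(allP a2); rewrite ltnn.
  have Ep : p1 = p2.
    have q1 : p1 <= size w1 by rewrite s1; lia.
    have q2 : p2 <= size w2 by rewrite s2; lia.
    by rewrite -(index_ins n1 q1) E index_ins.
  have Ew : w1 = w2 by rewrite -(rem_ins p1 n1) E rem_ins.
  by rewrite Ep Ew.
have Eio : perm_eq (iota 0 n.+1) (n :: iota 0 n).
  by rewrite -addn1 iotaD add0n perm_catC.
move=> x; apply/idP/idP.
  rewrite mem_permutations => H.
  have nx : n \in x by rewrite (perm_mem H) mem_iota add0n ltnSn.
  apply/allpairsP; exists (rem n x, index n x); split; last exact: ins_rem.
    rewrite mem_permutations -(perm_cons n).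
    apply: perm_trans (perm_trans H Eio); by rewrite perm_sym perm_to_rem.
  by rewrite mem_iota add0n /= -(size_iota 0 n.+1) -(perm_size H) index_mem.
move=> /allpairsP[[w p] [/= Hw Hp ->]].
rewrite mem_permutations /ins; apply: (@perm_trans _ (n :: iota 0 n)); last by rewrite perm_sym.
by rewrite -cat1s perm_catCA /= perm_cons cat_take_drop -mem_permutations.
Qed.

Definition Pk k w := n123 w && okk k w.
Definition lab k w := minn (decn w) k.
Fixpoint W (k n c : nat) : nat :=
  if n is m.+1 then \sum_(i < minn c.+1 k) W k m i.+1 else 1.

Lemma Pk_ins k n p w : w \in perms n -> p <= n ->
  Pk k (ins p n w) = Pk k w && (p <= decn w) && (p < k).
Proof.
move=> Hw Hp; have [aw sw uw] := perms_prop Hw.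
rewrite /Pk ins_n123 // /okk ins_okk // add0n (minn_idPl _) ?sw //.
rewrite dec_take ?sw //.
by case: (n123 w); case: (okk_aux _ _ _); case: (_ <= _); case: (_ < _).
Qed.

Lemma sum_iota_ord (F : nat -> nat) N : \sum_(p <- iota 0 N) F p = \sum_(p < N) F p.
Proof. by rewrite -(big_mkord xpredT) /index_iota subn0. Qed.

Lemma step k n (F : nat -> nat) : 0 < k ->
  \sum_(w <- perms n.+1 | Pk k w) F (lab k w) =
  \sum_(w <- perms n | Pk k w) \sum_(i < minn (lab k w).+1 k) F i.+1.
Proof.
move=> k0.
rewrite big_mkcond (perm_big _ (perms_ins n)) big_allpairs_dep.
rewrite [RHS]big_mkcond; apply: eq_big_seq => w Hw.
transitivity (\sum_(p <- iota 0 n.+1) (if Pk k (ins p n w) then F (lab k (ins p n w)) else 0)); first by [].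
have [aw sw uw] := perms_prop Hw.
have dn := decn_size w; rewrite sw in dn.
have nw : n \notin w by apply/negP => /(allP aw); rewrite ltnn.
case Pw: (Pk k w); last first.
  rewrite big1_seq // => p; rewrite mem_iota add0n ltnS => /andP[_ Hp].
  by rewrite Pk_ins // Pw.
set d := decn w in dn *; set m := minn d k.-1.
have mn : m <= n by rewrite /m; lia.
have -> : iota 0 n.+1 = iota 0 m.+1 ++ iota m.+1 (n - m).
  by rewrite -iotaD; congr iota; lia.
set L1 := iota 0 m.+1; set L2 := iota m.+1 (n - m).
rewrite big_cat /= [X in _ + X]big1_seq ?addn0; last first.
  move=> p /andP[_]; rewrite mem_iota => /andP[Hp1 Hp2].
  rewrite Pk_ins ?Pw //=; last by lia.
  have -> : (p <= d) && (p < k) = false by apply/negP => /andP[]; rewrite /m in Hp1; lia.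
  by [].
rewrite (eq_big_seq (fun p => F (lab k (ins p n w)))); last first.
  move=> p; rewrite mem_iota add0n => /andP[_ Hp].
  rewrite Pk_ins ?Pw //=; last by lia.
  by have -> : (p <= d) && (p < k) by apply/andP; split; rewrite /m in Hp; lia.
rewrite sum_iota_ord big_ord_recl.
have -> : minn (lab k w).+1 k = m.+1 by rewrite /lab /m -/d; lia.
rewrite big_ord_recr /= addnC; congr (_ + _).
  apply: eq_bigr => i _; rewrite /bump /= add1n /lab decn_ins //; last 2 first.
  - by rewrite sw; have := ltn_ord i; lia.
  - by have := ltn_ord i; rewrite /m; lia.
  by rewrite /=; congr F; have := ltn_ord i; rewrite /m; lia.
rewrite /lab (@decn_ins n 0 w) //=; congr F; rewrite -/d /m; lia.
Qed.

Lemma count_W k n m : 0 < k ->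
  \sum_(w <- perms n | Pk k w) W k m (lab k w) = W k (n + m) 0.
Proof.
move=> k0; elim: n m => [|n IH] m.
  by rewrite /perms /= big_cons big_nil /Pk /= /lab /= min0n addn0.
rewrite step // addSnnS -IH; apply: eq_bigr => w _ /=; by [].
Qed.

Lemma count_perms k n : 0 < k -> count (Pk k) (perms n) = W k n 0.
Proof.
move=> k0; have := count_W n 0 k0; rewrite addn0 => <-.
by rewrite -sum1_count; apply: eq_bigr.
Qed.

Lemma iota1 m : iota 1 m = map S (iota 0 m).
Proof. exact: (iotaDl 1 0 m). Qed.

Lemma okk_auxE k pre w : okk_aux k pre w =
  all (fun l => count (fun y => y < nth 0 w l) pre +
                count (fun i => nth 0 w i < nth 0 w l) (iota 0 l) < k) (iota 0 (size w)).
Proof.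
elim: w pre => //= x t IH pre; rewrite IH addn0.
congr (_ && _).
rewrite iota1 all_map; apply: eq_all => l /=.
rewrite iota1 count_map /=.
by rewrite addnCA addnA.
Qed.

Lemma okkE k w : okk k w =
  all (fun l => count (fun i => nth 0 w i < nth 0 w l) (iota 0 l) < k) (iota 0 (size w)).
Proof. by rewrite /okk okk_auxE. Qed.

Lemma n123_idx w : n123 w ->
  forall i j l, i < j -> j < l -> l < size w ->
  ~~ ((nth 0 w i < nth 0 w j) && (nth 0 w j < nth 0 w l)).
Proof.
elim: w => //= x t IH /andP[Hp Hn] [|i] [|j] [|l] //= ij jl ls.
  by move/(pairwiseP 0): Hp => H; apply: H; rewrite ?unfold_in /=; lia.
exact: (IH Hn i j l ij jl ls).
Qed.

Lemma idx_n123 w : (forall i j l, i < j -> j < l -> l < size w ->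
  ~~ ((nth 0 w i < nth 0 w j) && (nth 0 w j < nth 0 w l))) -> n123 w.
Proof.
elim: w => //= x t IH H; apply/andP; split.
  apply/(pairwiseP 0) => j l Hj Hl jl.
  exact: (H 0 j.+1 l.+1).
by apply: IH => i j l ij jl ls; apply: (H i.+1 j.+1 l.+1).
Qed.

Definition containsL (w p : seq nat) : Prop :=
  exists g : nat -> nat, (forall a, a < size p -> g a < size w) /\
   (forall a b, a < size p -> b < size p ->
     ((a < b) -> g a < g b) /\
     ((nth 0 w (g a) < nth 0 w (g b)) = (nth 0 p a < nth 0 p b))).

Lemma L123 w : containsL w [:: 1; 2; 3] <-> ~~ n123 w.
Proof.
split.
  move=> [g [Hg H]]; apply/negP => /n123_idx H1.
  have [H01 E01] := H 0 1 erefl erefl; have [H12 E12] := H 1 2 erefl erefl.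
  move: (H1 (g 0) (g 1) (g 2) (H01 erefl) (H12 erefl) (Hg 2 erefl)).
  by rewrite E01 E12.
move=> Hn.
have : ~ (forall i j l, i < j -> j < l -> l < size w ->
  ~~ ((nth 0 w i < nth 0 w j) && (nth 0 w j < nth 0 w l))).
  by move=> H; move/negP: Hn; apply; apply: idx_n123.
move=> Hc.
have [i [j [l [ij jl ls /andP[v1 v2]]]]] : exists i j l, [/\ i < j, j < l, l < size w &
   (nth 0 w i < nth 0 w j) && (nth 0 w j < nth 0 w l)].
  apply: NNPP => Hne; apply: Hc => i j l ij jl ls.
  by apply/negP => Hv; apply: Hne; exists i, j, l; split.
exists (nth 0 [:: i; j; l]); split.
  by move=> [|[|[|a]]] //= _; lia.
move=> [|[|[|a]]] [|[|[|b]]] //= _ _; split => //; lia.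
Qed.

Definition tauL (k : nat) : seq nat := rcons (rev (iota 1 k)) k.+1.

Lemma size_tauL k : size (tauL k) = k.+1.
Proof. by rewrite /tauL size_rcons size_rev size_iota. Qed.

Lemma nth_tauL k a : a < k -> nth 0 (tauL k) a = k - a.
Proof.
move=> ak; rewrite /tauL nth_rcons size_rev size_iota ak nth_rev ?size_iota //.
rewrite nth_iota; lia.
Qed.

Lemma nth_tauLk k : nth 0 (tauL k) k = k.+1.
Proof. by rewrite /tauL nth_rcons size_rev size_iota ltnn eqxx. Qed.

Lemma Ltau k w : uniq w -> n123 w ->
  containsL w (tauL k) <-> ~~ okk k w.
Proof.
move=> uw /n123_idx H123; rewrite okkE; split.
  move=> [g [Hg H]]; rewrite size_tauL in Hg H; apply/negP => /allP Hall.
  have lw : g k < size w by apply: Hg.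
  move: (Hall (g k)); rewrite mem_iota lw /= => /(_ isT); apply/negP; rewrite -leqNgt.
  have Hin : forall a, a < k -> g a < g k /\ nth 0 w (g a) < nth 0 w (g k).
    move=> a ak; have [H1 H2] := H a k (ltnW ak) (ltnSn k).
    by split; [apply: H1 | rewrite H2 nth_tauL // nth_tauLk; lia].
  rewrite -size_filter -{1}(size_iota 0 k) -(size_map g).
  apply: uniq_leq_size.
    rewrite map_inj_in_uniq ?iota_uniq // => a b; rewrite !mem_iota /= => Ha Hb E.
    case: (ltngtP a b) => // ab.
      by have [H1 _] := H a b (ltnW (leq_trans Ha (ltnSn _))) (ltnW (leq_trans Hb (ltnSn _))); move: (H1 ab); rewrite E ltnn.
    by have [H1 _] := H b a (ltnW (leq_trans Hb (ltnSn _))) (ltnW (leq_trans Ha (ltnSn _))); move: (H1 ab); rewrite E ltnn.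
  move=> x /mapP[a]; rewrite mem_iota /= => Ha ->.
  by have [H1 H2] := Hin a Ha; rewrite mem_filter H2 mem_iota /= H1.
move=> /allPn[l]; rewrite mem_iota /= => ls; rewrite -leqNgt => Hk.
set pos := filter (fun i => nth 0 w i < nth 0 w l) (iota 0 l).
have Hsz : k <= size pos by rewrite size_filter.
have Hpos : forall a, a < size pos -> nth 0 pos a < l /\ nth 0 w (nth 0 pos a) < nth 0 w l.
  move=> a Ha; move: (mem_nth 0 Ha); rewrite mem_filter mem_iota /= => /andP[-> ->].
  by [].
have Hsort : sorted ltn pos by apply: sorted_filter; [exact: ltn_trans | exact: iota_ltn_sorted].
have Hmono : forall a b, a < b -> b < size pos -> nth 0 pos a < nth 0 pos b.
  move=> a b ab bs; apply: (sorted_ltn_nth ltn_trans 0 Hsort) => //; rewrite inE; lia.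
exists (fun a => if a < k then nth 0 pos a else l); rewrite size_tauL; split.
  move=> a _; case: ifP => ak //.
  have [H1 _] := Hpos a (leq_trans ak Hsz); lia.
move=> a b Ha Hb.
have Ea : a < k \/ a = k by lia.
have Eb : b < k \/ b = k by lia.
case: Ea => [ak|->]; case: Eb => [bk|->]; rewrite ?ak ?bk ?ltnn.
- have [A1 A2] := Hpos a (leq_trans ak Hsz); have [B1 B2] := Hpos b (leq_trans bk Hsz).
  have bsz : b < size pos by apply: leq_trans bk Hsz.
  have asz : a < size pos by apply: leq_trans ak Hsz.
  rewrite !nth_tauL //; split; first by move=> ab; apply: Hmono.
  case: (ltngtP a b) => ab.
  + have := H123 _ _ _ (Hmono _ _ ab bsz) B1 ls; rewrite B2 andbT => /negbTE ->.
    lia.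
  + have := H123 _ _ _ (Hmono _ _ ab asz) A1 ls; rewrite A2 andbT => /negbTE Hba.
    have Hne : nth 0 w (nth 0 pos a) != nth 0 w (nth 0 pos b).
      have ls' : l <= size w by rewrite add0n in ls; apply: ltnW.
      rewrite nth_uniq //; try (by apply: leq_trans A1 ls'); try (by apply: leq_trans B1 ls').
      by apply/negP => /eqP E; move: (Hmono _ _ ab asz); rewrite E ltnn.
    have : nth 0 w (nth 0 pos a) <= nth 0 w (nth 0 pos b) by rewrite leqNgt Hba.
    rewrite leq_eqVlt (negbTE Hne) /= => ->; lia.
  + by rewrite ab ltnn; lia.
- have [A1 A2] := Hpos a (leq_trans ak Hsz).
  rewrite (nth_tauL ak) nth_tauLk A2; split => //; lia.
- have [B1 B2] := Hpos b (leq_trans bk Hsz).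
  rewrite (nth_tauL bk) nth_tauLk; split; first lia.
  have -> : (nth 0 w l < nth 0 w (nth 0 pos b)) = false by apply/negbTE; rewrite -leqNgt ltnW.
  lia.
- by [].
Qed.

Definition wl n (s : 'S_n) : seq nat := [seq val (s i) | i <- enum 'I_n].

Lemma size_wl n (s : 'S_n) : size (wl s) = n.
Proof. by rewrite size_map size_enum_ord. Qed.

Lemma nth_wl n (s : 'S_n) (i : 'I_n) : nth 0 (wl s) i = s i.
Proof. by rewrite (nth_map i) ?size_enum_ord // nth_ord_enum. Qed.

Lemma uniq_wl n (s : 'S_n) : uniq (wl s).
Proof.
rewrite map_inj_uniq ?enum_uniq // => i j /val_inj; exact: perm_inj.
Qed.

Lemma contains_L n (s : 'S_n) p : contains s p <-> containsL (wl s) p.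
Proof.
split.
  move=> /existsP[f /forallP H].
  exists (fun a => odflt 0 (omap (fun a' => val (f a')) (insub a))).
  have gE : forall a (Ha : a < size p),
      odflt 0 (omap (fun a' => val (f a')) (insub a)) = f (Ordinal Ha).
    by move=> a Ha; rewrite insubT.
  split; first by move=> a Ha; rewrite gE size_wl.
  move=> a b Ha Hb; rewrite !gE !nth_wl.
  move: (H (Ordinal Ha)) => /forallP /(_ (Ordinal Hb)) /andP[/implyP H1 /eqP H2].
  by split.
move=> [g [Hg H]].
have Hg' : forall a : 'I_(size p), g a < n by move=> a; rewrite -(size_wl s); apply: Hg.
apply/existsP; exists [ffun a => Ordinal (Hg' a)].
apply/forallP => a; apply/forallP => b; rewrite !ffunE /=.
have [H1 H2] := H a b (ltn_ord a) (ltn_ord b).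
have E : forall i : 'I_n, val (s i) = nth 0 (wl s) i by move=> i; rewrite nth_wl.
rewrite !E /= H2 eqxx andbT; apply/implyP; exact: H1.
Qed.

Lemma avP k n (s : 'S_n) :
  (avoids s pat123 && avoids s (tau k)) = Pk k (wl s).
Proof.
rewrite /avoids /Pk.
have -> : contains s pat123 = ~~ n123 (wl s).
  apply/idP/idP; first by move/contains_L/L123.
  by move/L123/contains_L.
rewrite negbK; case N: (n123 (wl s)) => //=.
have -> : contains s (tau k) = ~~ okk k (wl s).
  apply/idP/idP; first by move/contains_L/(Ltau k (uniq_wl s) N).
  by move/(Ltau k (uniq_wl s) N)/contains_L.
by rewrite negbK.
Qed.

Lemma wl_inj n : injective (@wl n).
Proof.
move=> s t E; apply/permP => i; apply: val_inj.
by have := congr1 (fun w => nth 0 w i) E; rewrite /= !nth_wl.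
Qed.

Lemma perm_wl n : perm_eq [seq wl s | s <- enum 'S_n] (perms n).
Proof.
apply: uniq_perm; [by rewrite map_inj_uniq ?enum_uniq //; exact: wl_inj
                  | exact: permutations_uniq |].
move=> w; apply/idP/idP.
  move=> /mapP[s _ ->]; rewrite mem_permutations.
  apply: uniq_perm; [exact: uniq_wl | exact: iota_uniq |] => y.
  rewrite mem_iota add0n /= /wl; apply/idP/idP.
    by move=> /mapP[i _ ->]; apply: ltn_ord.
  move=> Hy; apply/mapP; exists (s^-1 (Ordinal Hy))%g; first by rewrite mem_enum.
  by rewrite permKV.
move=> Hw; have [aw sw uw] := perms_prop Hw.
have Hf : forall i : 'I_n, nth 0 w i < n.
  by move=> i; apply: (allP aw); apply: mem_nth; rewrite sw.
have f_inj : injective (fun i => Ordinal (Hf i)).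
  move=> i j [] /eqP; rewrite nth_uniq ?sw // => /eqP; exact: val_inj.
apply/mapP; exists (perm f_inj); first by rewrite mem_enum.
apply: (@eq_from_nth _ 0); first by rewrite size_wl.
move=> i Hi; rewrite sw in Hi.
by rewrite (nth_wl (perm f_inj) (Ordinal Hi)) permE.
Qed.

Lemma av_W k n : 0 < k -> av k n = W k n 0.
Proof.
move=> k0; rewrite -count_perms // /av cardE /enum_mem size_filter.
rewrite -(seq.permP (perm_wl n)) count_map.
by rewrite -enumT; apply: eq_count => s; rewrite /= inE avP.
Qed.

Fixpoint Bf (k n c : nat) : nat :=
  if n is m.+1 then \sum_(i < minn c.+1 k - 1) Bf k m i.+2 else 1.

Lemma B_W k n c : 1 < k -> 0 < c -> Bf k n c = W k.-1 n c.-1.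
Proof.
move=> k1; elim: n c => [|n IH] c c0 //=.
have -> : minn c.+1 k - 1 = minn c.-1.+1 k.-1 by lia.
by apply: eq_bigr => i _; rewrite IH.
Qed.

Lemma Wk0 k n : 0 < k -> W k n.+1 0 = W k n 1.
Proof. by move=> k0 /=; rewrite (minn_idPl k0) big_ord1. Qed.

Lemma decomp k n c : 0 < k ->
  W k n c = Bf k n c + \sum_(j < n) Bf k j c * W k (n - j.+1) 1.
Proof.
move=> k0; elim: n c => [|n IH] c; first by rewrite big_ord0.
set M := minn c.+1 k - 1.
have HM : minn c.+1 k = M.+1 by rewrite /M; lia.
transitivity (W k n 1 + \sum_(i < M) W k n i.+2).
  by rewrite [W _ _ _]/= HM big_ord_recl; congr (_ + _); apply: eq_bigr => i _; rewrite lift0.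
transitivity (\sum_(i < M) Bf k n i.+2 +
   (W k n 1 + \sum_(j < n) Bf k j.+1 c * W k (n - j.+1) 1)); last first.
  rewrite [in RHS]big_ord_recl [Bf k n.+1 c]/= -/M; congr (_ + _).
  rewrite mul1n subSS subn0; congr (_ + _).
rewrite [X in _ + X = _](eq_bigr (fun i : 'I_M => Bf k n i.+2 +
   \sum_(j < n) Bf k j i.+2 * W k (n - j.+1) 1)); last by move=> i _; rewrite IH.
rewrite big_split /= addnCA; congr (_ + _); congr (_ + _).
rewrite exchange_big /=; apply: eq_bigr => j _.
by rewrite -/M big_distrl.
Qed.

Lemma recW k m : 1 < k ->
  W k m.+1 0 = \sum_(i < m.+1) W k.-1 i 0 * W k (m - i) 0.
Proof.
move=> k1; have k0 : 0 < k by lia.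
rewrite Wk0 // decomp // B_W //.
rewrite big_ord_recr /= subnn muln1 addnC; congr (_ + _).
apply: eq_bigr => j _; rewrite B_W //=.
rewrite -Wk0 //.
have -> : (m - j.+1).+1 = m - j by have := ltn_ord j; lia.
by [].
Qed.

Lemma recW' k m : 1 < k ->
  W k m.+1 0 = \sum_(i < m.+1) W k i 0 * W k.-1 (m - i) 0.
Proof.
move=> k1; rewrite recW // (reindex_inj rev_ord_inj); apply: eq_bigr => i _ /=.
rewrite subSS mulnC; congr (_ * _); congr W.
have := ltn_ord i; lia.
Qed.

Lemma W2 m c : 0 < c -> W 2 m c = 2 ^ m.
Proof.
elim: m c => [|m IH] c c0 //=.
have -> : minn c.+1 2 = 2 by lia.
by rewrite !big_ord_recr big_ord0 /= !IH // expnS mul2n addnn add0n.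
Qed.

Lemma W3_32 m : W 3 m 3 = W 3 m 2.
Proof. by case: m. Qed.

Lemma W3_1 m : W 3 m.+1 1 = W 3 m 1 + W 3 m 2.
Proof. by rewrite /= !big_ord_recr big_ord0. Qed.

Lemma W3_2 m : W 3 m.+1 2 = W 3 m 1 + W 3 m 2 + W 3 m 2.
Proof. by rewrite /= !big_ord_recr big_ord0 /= W3_32. Qed.

Lemma rec3 m : W 3 m.+3 0 + W 3 m.+1 0 = 3 * W 3 m.+2 0.
Proof.
rewrite !Wk0 //; case: m => [|m].
  by rewrite !W3_1 W3_2 /=.
rewrite !W3_1 !W3_2 ?W3_1; lia.
Qed.

From Stdlib Require Import FunctionalExtensionality.
Import Order.TTheory GRing.Theory Num.Theory.
Local Open Scope ring_scope.

Lemma sum_Posz (I : Type) (r : seq I) (P : pred I) (F : I -> nat) :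
  ((\sum_(i <- r | P i) F i)%N)%:Z = \sum_(i <- r | P i) (F i)%:Z.
Proof. by apply: (big_morph Posz PoszD). Qed.

Lemma mulX (g : fps) t : fps_mul fps_X g t = if t is t'.+1 then g t' else 0.
Proof.
rewrite /fps_mul; case: t => [|t].
  by rewrite big_ord1 /fps_X /= mul0r.
rewrite big_ord_recl /fps_X /= mul0r add0r big_ord_recl /= mul1r subn1 /=.
rewrite big1 ?addr0 // => i _; by rewrite /= mul0r.
Qed.

Lemma short3 (f c : nat -> int) n : (forall t, (3 <= t)%N -> c t = 0) ->
  \sum_(i < n.+3) f i * c (n.+2 - i)%N = f n.+2 * c 0%N + f n.+1 * c 1%N + f n * c 2%N.
Proof.
move=> Hc; rewrite !big_ord_recr /= big1 ?add0r; last first.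
  move=> i _; rewrite Hc ?mulr0 //; have := ltn_ord i; lia.
have -> : (n.+2 - n = 2)%N by lia.
have -> : (n.+2 - n.+1 = 1)%N by lia.
by rewrite subnn addrC [f n * _ + _]addrC addrA.
Qed.

Lemma gfW k n : (0 < k)%N -> gf k n = (W k n 0)%:Z.
Proof. by move=> k0; rewrite /gf av_W. Qed.

Lemma part1 : fps_mul (gf 2) (fps_sub (fps_const 1) (fps_scale 2 fps_X))
    = fps_sub (fps_const 1) fps_X.
Proof.
apply: functional_extensionality => n.
rewrite /fps_mul.
case: n => [|[|m]].
- by rewrite big_ord1 /fps_sub /fps_scale /fps_const /fps_X /= gfW.
- rewrite !big_ord_recr big_ord0 /fps_sub /fps_scale /fps_const /fps_X /= !gfW //.
  by rewrite Wk0 // W2.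
- rewrite short3; last by move=> [|[|[|t]]].
  rewrite /fps_sub /fps_scale /fps_const /fps_X /= !gfW // !Wk0 //.
  case: m => [|m]; first by rewrite !(@W2 _ 1).
  rewrite Wk0 // !(@W2 _ 1) // !expnS !PoszM; lia.
Qed.

Lemma part2 k : (3 <= k)%N ->
  fps_mul (gf k) (fps_sub (fps_const 1) (fps_mul fps_X (gf k.-1))) = fps_const 1.
Proof.
move=> k3; have k1 : (1 < k)%N by lia.
have k0 : (0 < k)%N by lia.
have k'0 : (0 < k.-1)%N by lia.
apply: functional_extensionality => n; rewrite {1}/fps_mul.
case: n => [|m].
  by rewrite big_ord1 /fps_sub /fps_const mulX /= gfW.
rewrite big_ord_recr /= subnn.
rewrite (eq_bigr (fun i : 'I_m.+1 => - ((W k i 0)%:Z * (W k.-1 (m - i) 0)%:Z))); last first.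
  move=> i _; rewrite /fps_sub /fps_const.
  have -> : (m.+1 - i = (m - i).+1)%N by have := ltn_ord i; lia.
  by rewrite mulX /= !gfW // sub0r mulrN.
rewrite sumrN /fps_sub /fps_const mulX /= subr0 mulr1 gfW // recW' // sum_Posz.
rewrite (eq_bigr (fun i : 'I_m.+1 => (W k i 0)%:Z * (W k.-1 (m - i) 0)%:Z)) ?addNr //.
Qed.

Lemma part3 : fps_mul (gf 3)
    (fps_add (fps_sub (fps_const 1) (fps_scale 3 fps_X)) (fps_mul fps_X fps_X))
    = fps_sub (fps_const 1) (fps_scale 2 fps_X).
Proof.
apply: functional_extensionality => n; rewrite {1}/fps_mul.
case: n => [|[|m]].
- by rewrite big_ord1 /fps_add /fps_sub /fps_scale /fps_const mulX /fps_X /= gfW.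
- rewrite !big_ord_recr big_ord0 /fps_add /fps_sub /fps_scale /fps_const !mulX /fps_X /= !gfW //.
  by rewrite Wk0.
- rewrite short3; last by move=> [|[|[|t]]] //= _; rewrite /fps_add /fps_sub /fps_scale /fps_const mulX /fps_X /=.
  rewrite /fps_add /fps_sub /fps_scale /fps_const !mulX /fps_X /= !gfW //.
  case: m => [|m]; first by rewrite !Wk0 // W3_1.
  have E := rec3 m; lia.
Qed.

Lemma part4 : av 3 0 = 1%N /\ av 3 1 = 1%N /\ av 3 2 = 2%N /\
   forall n : nat, (3 <= n)%N ->
     (av 3 n)%:Z = 3 * (av 3 n.-1)%:Z - (av 3 n.-2)%:Z.
Proof.
rewrite !av_W //; split; first by []; split; first by rewrite Wk0.
split; first by rewrite Wk0 // W3_1.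
case=> [|[|[|m]]] // _; rewrite !av_W //.
rewrite (_ : m.+3.-1 = m.+2) // (_ : m.+3.-2 = m.+1) //.
have E := rec3 m; lia.
Qed.

(* Identities of formal power series, with 1/g (constant term 1) expressed as
   "h * g = numerator". *)
Theorem mainTheorem3 :
  (* f_2 = (1 - x) / (1 - 2x) *)
  fps_mul (gf 2) (fps_sub (fps_const 1) (fps_scale 2 fps_X))
    = fps_sub (fps_const 1) fps_X /\
  (* f_k = 1 / (1 - x f_{k-1}) for k >= 3 *)
  (forall k : nat, (3 <= k)%N ->
     fps_mul (gf k) (fps_sub (fps_const 1) (fps_mul fps_X (gf k.-1)))
       = fps_const 1) /\
  (* f_3 = (1 - 2x) / (1 - 3x + x^2) *)
  fps_mul (gf 3)
    (fps_add (fps_sub (fps_const 1) (fps_scale 3 fps_X)) (fps_mul fps_X fps_X))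
    = fps_sub (fps_const 1) (fps_scale 2 fps_X) /\
  (* |S_n(123,3214)| = 1, 1, 2, then Fbar_n = 3 Fbar_{n-1} - Fbar_{n-2} *)
  (av 3 0 = 1%N /\ av 3 1 = 1%N /\ av 3 2 = 2%N /\
   forall n : nat, (3 <= n)%N ->
     (av 3 n)%:Z = 3 * (av 3 n.-1)%:Z - (av 3 n.-2)%:Z).
Proof.
split; first exact: part1.
split; first exact: part2.
split; first exact: part3.
exact: part4.
Qed.
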